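(* Let $Y,Z$ be complex Banach spaces, let $\mathcal B$ be a collection of non-empty subsets of $Y$, and let $I\subseteq\mathbb R^n$ be admissible with respect to the almost periodic extensions. Suppose $F:I\to Y$ is uniformly continuous and Bohr almost periodic, and $G:I\times Y\to Z$ is Bohr $\mathcal B$-almost periodic with $\overline{R(F)}=B\in\mathcal B$, where $R(F)$ is the range of $F$. If $G$ is uniformly continuous on $I\times B$, then $W:I\to Z$, $W(\mathbf t):=G(\mathbf t;F(\mathbf t))$, is uniformly continuous and Bohr almost periodic.
   Context: $\emptyset\ne I\subseteq\mathbb R^n$ with $I+I\subseteq I$ is admissible with respect to the almost periodic extensions if for every complex Banach space $V$ and every uniformly continuous Bohr almost periodic $H:I\to V$ there exists a unique Bohr almost periodic $\tilde H:\mathbb R^n\to V$ with $\tilde H=H$ on $I$. A continuous $H:I\to V$ is Bohr almost periodic if for every $\epsilon>0$ there is $l>0$ such that for each $\mathbf t_0\in I$ there is $\tau\in I$ with $|\tau-\mathbf t_0|\le l$ and $\|H(\mathbf t+\tau)-H(\mathbf t)\|\le\epsilon$ for all $\mathbf t\in I$. A continuous $G:I\times Y\to Z$ is Bohr $\mathcal B$-almost periodic if for every $B\in\mathcal B$ and $\epsilon>0$ there is $l>0$ such that for each $\mathbf t_0\in I$ there is $\tau\in I$ with $|\tau-\mathbf t_0|\le l$ and $\|G(\mathbf t+\tau;y)-G(\mathbf t;y)\|_Z\le\epsilon$ for all $\mathbf t\in I$, $y\in B$. *)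

(* Defs.v *)
(* R^n is 'rV[R]_n with the Euclidean norm,
   complex Banach spaces are completeNormedModType R[i] (R[i] = complex R). *)
From mathcomp Require Import all_boot all_order all_algebra.
From mathcomp Require Import complex.
From mathcomp Require Import all_classical all_reals all_analysis.
Import Order.TTheory GRing.Theory Num.Theory.
Import numFieldNormedType.Exports.
Set Implicit Arguments.
Unset Strict Implicit.
Unset Printing Implicit Defensive.
Local Open Scope ring_scope.
Local Open Scope classical_set_scope.

Definition enorm {R : realType} {n : nat} (x : 'rV[R]_n) : R :=
  Num.sqrt (\sum_(i < n) x ord0 i ^+ 2).

Definition add_closed {R : realType} {n : nat} (I : set 'rV[R]_n) : Prop :=
  forall s t, I s -> I t -> I (s + t).

(* continuity of H : I -> V (H given as a total function, only its values on I matter) *)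
Definition cont_on {R : realType} {n : nat} {V : normedModType R[i]}
  (I : set 'rV[R]_n) (H : 'rV[R]_n -> V) : Prop :=
  forall t, I t -> forall e : R, 0 < e -> exists2 d : R, 0 < d &
    forall s, I s -> enorm (s - t) < d -> `|H s - H t| < (e%:C)%C.

Definition unif_cont_on {R : realType} {n : nat} {V : normedModType R[i]}
  (I : set 'rV[R]_n) (H : 'rV[R]_n -> V) : Prop :=
  forall e : R, 0 < e -> exists2 d : R, 0 < d &
    forall s t, I s -> I t -> enorm (s - t) < d -> `|H s - H t| < (e%:C)%C.

Definition bohr_ap {R : realType} {n : nat} {V : normedModType R[i]}
  (I : set 'rV[R]_n) (H : 'rV[R]_n -> V) : Prop :=
  cont_on I H /\
  forall e : R, 0 < e -> exists2 l : R, 0 < l &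
    forall t0, I t0 -> exists tau, [/\ I tau, enorm (tau - t0) <= l &
      forall t, I t -> `|H (t + tau) - H t| <= (e%:C)%C].

Definition ap_admissible {R : realType} {n : nat} (I : set 'rV[R]_n) : Prop :=
  I !=set0 /\ add_closed I /\
  forall (V : completeNormedModType R[i]) (H : 'rV[R]_n -> V),
    unif_cont_on I H -> bohr_ap I H ->
    exists Ht : 'rV[R]_n -> V,
      [/\ bohr_ap setT Ht, (forall t, I t -> Ht t = H t) &
          forall Ht' : 'rV[R]_n -> V, bohr_ap setT Ht' ->
            (forall t, I t -> Ht' t = H t) -> Ht' = Ht].

Definition cont_on2 {R : realType} {n : nat} {Y Z : normedModType R[i]}
  (I : set 'rV[R]_n) (G : 'rV[R]_n -> Y -> Z) : Prop :=
  forall t y, I t -> forall e : R, 0 < e -> exists2 d : R, 0 < d &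
    forall s x, I s -> enorm (s - t) < d -> `|x - y| < (d%:C)%C ->
      `|G s x - G t y| < (e%:C)%C.

Definition unif_cont_on2 {R : realType} {n : nat} {Y Z : normedModType R[i]}
  (I : set 'rV[R]_n) (B : set Y) (G : 'rV[R]_n -> Y -> Z) : Prop :=
  forall e : R, 0 < e -> exists2 d : R, 0 < d &
    forall s t x y, I s -> I t -> B x -> B y ->
      enorm (s - t) < d -> `|x - y| < (d%:C)%C -> `|G s x - G t y| < (e%:C)%C.

Definition bohr_B_ap {R : realType} {n : nat} {Y Z : normedModType R[i]}
  (I : set 'rV[R]_n) (BB : set (set Y)) (G : 'rV[R]_n -> Y -> Z) : Prop :=
  cont_on2 I G /\
  forall B, BB B -> forall e : R, 0 < e -> exists2 l : R, 0 < l &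
    forall t0, I t0 -> exists tau, [/\ I tau, enorm (tau - t0) <= l &
      forall t y, I t -> B y -> `|G (t + tau) y - G t y| <= (e%:C)%C].

(* Main.v *)
Require Import Defs.
From mathcomp Require Import all_boot all_order all_algebra.
From mathcomp Require Import complex.
From mathcomp Require Import all_classical all_reals all_analysis.
From mathcomp Require Import ring lra.
Import Order.TTheory GRing.Theory Num.Theory.
Import numFieldNormedType.Exports.
Local Open Scope ring_scope.
Local Open Scope classical_set_scope.

Section Enorm.
Variables (R : realType) (n : nat).
Implicit Types x y : 'rV[R]_n.

Lemma enorm_ge0 x : 0 <= enorm x.
Proof. exact: sqrtr_ge0. Qed.

Lemma enormN x : enorm (- x) = enorm x.
Proof. by rewrite /enorm; congr Num.sqrt; apply: eq_bigr => i _; rewrite mxE sqrrN. Qed.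

Lemma enorm0 : enorm (0 : 'rV[R]_n) = 0.
Proof. by rewrite /enorm big1 ?sqrtr0 // => i _; rewrite mxE expr0n. Qed.

Lemma enormB x y : enorm (x - y) = enorm (y - x).
Proof. by rewrite -enormN opprB. Qed.

Lemma enorm_coord x i : `|x ord0 i| <= enorm x.
Proof.
rewrite /enorm -sqrtr_sqr ler_sqrt; last by apply: sumr_ge0 => j _; exact: sqr_ge0.
rewrite (bigD1 i) //= lerDl; apply: sumr_ge0 => j _; exact: sqr_ge0.
Qed.

Lemma enorm_le_coord x w : 0 <= w -> (forall i, `|x ord0 i| <= w) -> enorm x <= n%:R * w.
Proof.
move=> w0 H.
have nw0 : 0 <= n%:R * w by rewrite mulr_ge0.
rewrite /enorm -(ger0_norm nw0) -sqrtr_sqr ler_sqrt ?sqr_ge0 //.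
apply: (@le_trans _ _ (\sum_(i < n) w ^+ 2)).
  apply: ler_sum => i _; have := H i; rewrite -[x ord0 i ^+ 2]real_normK ?num_real // => h.
  have := normr_ge0 (x ord0 i); nra.
rewrite sumr_const card_ord -mulr_natl.
have : (n%:R : R) <= n%:R ^+ 2.
  case: n => [|m]; first by rewrite expr0n.
  rewrite expr2 ler_peMl // ?ler1n // ltr0n //.
have : 0 <= w ^+ 2 by exact: sqr_ge0.
move=> h1 h2; rewrite exprMn; nra.
Qed.

Lemma addrDD x y z : (z + x) - (z + y) = x - y.
Proof. by rewrite opprD addrACA subrr add0r. Qed.

End Enorm.
Arguments enorm_ge0 {R n}. Arguments enormN {R n}. Arguments enorm0 {R n}.
Arguments enormB {R n}. Arguments enorm_coord {R n}. Arguments enorm_le_coord {R n}.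
Arguments addrDD {R n}.

Section Nrm.
Variable (R : realType) (V : normedModType R[i]).

Definition nrm (v : V) : R := complex.Re `|v|.

Lemma nrmE v : `|v| = (nrm v)%:C%C.
Proof.
rewrite /nrm; have := ger0_Im (normr_ge0 v).
by case: `|v| => a b /= ->.
Qed.

Lemma nrm_ge0 v : 0 <= nrm v.
Proof. by have := normr_ge0 v; rewrite nrmE lecR. Qed.

Lemma nrm_le v e : (`|v| <= e%:C)%C = (nrm v <= e).
Proof. by rewrite nrmE lecR. Qed.

Lemma nrm_lt v e : (`|v| < e%:C)%C = (nrm v < e).
Proof. by rewrite nrmE ltcR. Qed.

Lemma nrmD u v : nrm (u + v) <= nrm u + nrm v.
Proof. by rewrite -lecR rmorphD /= -!nrmE ler_normD. Qed.

Lemma nrmN v : nrm (- v) = nrm v.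
Proof. by rewrite /nrm normrN. Qed.

Lemma nrm0 : nrm 0 = 0.
Proof. by rewrite /nrm normr0. Qed.

Lemma nrmB u v : nrm (u - v) = nrm (v - u).
Proof. by rewrite /nrm distrC. Qed.

End Nrm.
Arguments nrm {R V}. Arguments nrmE {R V}. Arguments nrm_ge0 {R V}. Arguments nrm_le {R V}.
Arguments nrm_lt {R V}. Arguments nrmD {R V}. Arguments nrmN {R V}. Arguments nrm0 {R V}.
Arguments nrmB {R V}.
Section Lists.
Variables (R : realType) (T : eqType).

Definition minl (s : seq T) (g : T -> R) := foldr (fun x acc => Num.min (g x) acc) 1 s.
Definition maxl (s : seq T) (g : T -> R) := foldr (fun x acc => Num.max (g x) acc) 0 s.

Lemma minl_gt0 s g : (forall x, x \in s -> 0 < g x) -> 0 < minl s g.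
Proof.
elim: s => [|a s IH] H /=; first exact: ltr01.
rewrite lt_min H ?mem_head // IH // => x xs; by apply: H; rewrite in_cons xs orbT.

Qed.

Lemma minl_le s g x : x \in s -> minl s g <= g x.
Proof.
elim: s => [//|a s IH] /=; rewrite in_cons => /orP[/eqP ->|xs].
  by rewrite ge_min lexx.
by rewrite ge_min IH ?orbT.
Qed.

Lemma minl_le1 s g : minl s g <= 1.
Proof. by elim: s => [|a s IH] //=; rewrite ge_min IH orbT. Qed.

Lemma maxl_ge0 s g : 0 <= maxl s g.
Proof. by elim: s => [|a s IH] //=; rewrite le_max IH orbT. Qed.

Lemma maxl_ge s g x : x \in s -> g x <= maxl s g.
Proof.
elim: s => [//|a s IH] /=; rewrite in_cons => /orP[/eqP ->|xs].
  by rewrite le_max lexx.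
by rewrite le_max IH ?orbT.
Qed.
End Lists.
Arguments minl {R T}. Arguments maxl {R T}.
Arguments minl_gt0 {R T}. Arguments minl_le {R T}. Arguments minl_le1 {R T}.
Arguments maxl_ge0 {R T}. Arguments maxl_ge {R T}.

Section Cube.
Variables (R : realType) (n : nat).

Lemma cube_compact (L : R) : compact [set v : 'rV[R]_n | forall i, `[-L, L]%classic (v ord0 i)].
Proof. exact: (@rV_compact R n (fun=> `[-L, L]%classic) (fun=> @segment_compact R _ _)). Qed.

Lemma cube_net (L d : R) : 0 < d -> exists cs : seq 'rV[R]_n, forall r : 'rV[R]_n,
  (forall i, `|r ord0 i| <= L) -> exists2 c, c \in cs & forall i, `|r ord0 i - c ord0 i| < d.
Proof.
move=> d0.
set K := [set v : 'rV[R]_n | forall i, `[-L, L]%classic (v ord0 i)].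
have := cube_compact L; rewrite compact_cover => cc.
have [] := cc 'rV[R]_n K (fun x => ball x d).
- by move=> i _; exact: ball_open.
- move=> r Kr; exists r => //; exact: ballxx.
move=> D' _ HD; exists (finmap.enum_fset D') => r rL.
have /HD [x /= xD [_ bx]] : K r.
  by move=> i; rewrite /= in_itv /= -ler_norml.
exists x => // i; have := bx ord0 i; rewrite /ball /= distrC //.
Qed.
End Cube.
Set Implicit Arguments.
Unset Strict Implicit.

Section PM.
Variables (R : realType) (n : nat).
Local Notation vec := 'rV[R]_n.
Definition pm := vec -> vec -> R.

Definition pmok (f : pm) := [/\ forall u v, 0 <= f u v, forall u v, f u v = f v u,
  forall u v w, f u w <= f u v + f v w & forall u, f u u = 0].
Definition pcont (f : pm) := forall u e, 0 < e -> exists2 d, 0 < d &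
  forall v, enorm (v - u) < d -> f v u < e.
Definition pAP (f : pm) := forall e, 0 < e -> exists2 l, 0 < l &
  forall s, exists p, enorm (p - s) <= l /\ forall t, f (t + p) t <= e.
Definition fUC (P : set pm) := forall e, 0 < e -> exists2 d, 0 < d &
  forall f, P f -> forall u v, enorm (u - v) < d -> f u v < e.
Definition fNet (P : set pm) e := exists cs : seq vec, forall s,
  exists2 c, c \in cs & forall f, P f -> forall t, f (t + s) (t + c) <= e.
Definition fok (P : set pm) := forall f, P f -> pmok f.

Lemma fUC_sub P Q : P `<=` Q -> fUC Q -> fUC P.
Proof. move=> PQ H e e0; have [d d0 Hd] := H e e0; exists d => // f /PQ; exact: Hd. Qed.

Lemma fNet_sub P Q e : P `<=` Q -> fNet Q e -> fNet P e.
Proof. move=> PQ [cs H]; exists cs => s; have [c cs' Hc] := H s; exists c => // f /PQ; exact: Hc. Qed.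

Lemma fUCU P Q : fUC P -> fUC Q -> fUC (P `|` Q).
Proof.
move=> HP HQ e e0; have [d1 d10 H1] := HP e e0; have [d2 d20 H2] := HQ e e0.
exists (Num.min d1 d2); first by rewrite lt_min d10 d20.
move=> f [Pf|Qf] u v; rewrite lt_min => /andP[h1 h2]; [exact: H1|exact: H2].
Qed.

Lemma fUC0 : fUC set0.
Proof. by move=> e e0; exists 1 => // f []. Qed.

Lemma fNet0 e : fNet set0 e.
Proof. by exists [:: 0] => s; exists 0; rewrite ?mem_head // => f []. Qed.

Lemma rv_eq (x y : vec) : (forall i, x ord0 i = y ord0 i) -> x = y.
Proof. by move=> H; apply/rowP => i; exact: H. Qed.

Lemma fNetU P Q : fok P -> fok Q -> (forall e, 0 < e -> fNet P e) ->
  (forall e, 0 < e -> fNet Q e) -> forall e, 0 < e -> fNet (P `|` Q) e.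
Proof.
move=> okP okQ NP NQ e e0.
have e20 : 0 < e / 2 by rewrite divr_gt0.
have [cs1 H1] := NP _ e20; have [cs2 H2] := NQ _ e20.
pose rel c1 c2 s := (forall f, P f -> forall t, f (t + s) (t + c1) <= e / 2) /\
                    (forall f, Q f -> forall t, f (t + s) (t + c2) <= e / 2).
pose rep c1 c2 := get [set s | rel c1 c2 s].
exists [seq rep c1 c2 | c1 <- cs1, c2 <- cs2] => s.
have [c1 c1s Hc1] := H1 s; have [c2 c2s Hc2] := H2 s.
have : rel c1 c2 (rep c1 c2) by apply: (getPex (P := [set s | rel c1 c2 s])); exists s.
move=> [r1 r2]; exists (rep c1 c2); first by apply/allpairsP; exists (c1, c2).
move=> f [Pf|Qf] t.
- have [_ fs ft _] := okP f Pf.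
  apply: le_trans (ft _ (t + c1) _) _; rewrite [f (t + c1) _]fs.
  have := Hc1 f Pf t; have := r1 f Pf t; lra.
- have [_ fs ft _] := okQ f Qf.
  apply: le_trans (ft _ (t + c2) _) _; rewrite [f (t + c2) _]fs.
  have := Hc2 f Qf t; have := r2 f Qf t; lra.
Qed.

End PM.
Section Heine.
Variables (R : realType) (n : nat).
Local Notation vec := 'rV[R]_n.

Lemma n_lt (d : R) (k : R) : 0 < d -> 0 <= k -> k <= 2 * n%:R ->
  k * (d / (2 * n%:R + 1)) < d.
Proof.
move=> d0 k0 kn.
have N0 : (0 : R) <= n%:R by [].
have p : 0 < 2 * n%:R + 1 :> R by lra.
rewrite mulrA ltr_pdivrMr //; nra.
Qed.

Lemma coordB (x y : vec) i : (x - y) ord0 i = x ord0 i - y ord0 i.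
Proof. by rewrite !mxE. Qed.

Lemma heine (f : pm R n) : pmok f -> pcont f -> pAP f -> fUC [set f].
Proof.
move=> [f0 fs ft fxx] fc fap e e0.
have e8 : 0 < e / 8 by rewrite divr_gt0.
have [l l0 Hl] := fap _ e8.
pose K := [set v : vec | forall i, `[-(l+1), l+1]%classic (v ord0 i)].
pose dd x := get [set d | 0 < d /\ forall v, enorm (v - x) < d -> f v x < e / 8].
have ddP x : 0 < dd x /\ forall v, enorm (v - x) < dd x -> f v x < e / 8.
  apply: (getPex (P := [set d | 0 < d /\ forall v, enorm (v - x) < d -> f v x < e / 8])).
  by have [d d0 Hd] := fc x _ e8; exists d.
pose rho x := dd x / (2 * n%:R + 1).
have rho0 x : 0 < rho x.
  by rewrite /rho divr_gt0 ?(ddP x).1 //; apply: ltr_pwDr => //; rewrite mulr_ge0.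
have := @cube_compact R n (l + 1); rewrite compact_cover => cc.
have [D' _ HD] : finite_subset_cover K (fun x => ball x (rho x)) K.
  apply: cc; first by move=> x _; exact: ball_open.
  by move=> r Kr; exists r => //; exact: ballxx.
pose del := Num.min 1 (minl (finmap.enum_fset D') rho).
exists del; first by rewrite lt_min ltr01 minl_gt0.
move=> g -> u v uv.
have [p [pu Hp]] := Hl u.
pose r := u - p; pose r' := v - p.
have rc i : `|r ord0 i| <= l.
  apply: le_trans (enorm_coord _ _) _; by rewrite /r enormB.
have Kr : K r by move=> i; rewrite /= in_itv /= -ler_norml; have := rc i; lra.
have [x xD [_ bx]] := HD r Kr.
have delr : del <= rho x by rewrite ge_min minl_le ?orbT.
have del1 : del <= 1 by rewrite ge_min lexx.
have ci i : `|r' ord0 i - r ord0 i| < del.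
  have -> : r' ord0 i - r ord0 i = (v - u) ord0 i by rewrite !mxE; ring.
  apply: le_lt_trans (enorm_coord _ _) _; by rewrite enormB.
have bxi i : `|r ord0 i - x ord0 i| < rho x by rewrite distrC; exact: (bx ord0 i).
have h1 : enorm (r - x) < dd x.
  apply: le_lt_trans (enorm_le_coord _ (rho x) _ _) _; first exact: ltW.
    by move=> i; rewrite coordB; exact: ltW.
  have := n_lt (k := n%:R) (ddP x).1; rewrite /rho; apply => //; have : (0:R) <= n%:R by []; lra.
have h2 : enorm (r' - x) < dd x.
  apply: le_lt_trans (enorm_le_coord _ (2 * rho x) _ _) _.
  - by rewrite mulr_ge0 // ltW.
  - move=> i; rewrite coordB.
    have -> : r' ord0 i - x ord0 i = (r' ord0 i - r ord0 i) + (r ord0 i - x ord0 i) by ring.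
    apply: le_trans (ler_normD _ _) _; have := ci i; have := bxi i; lra.
  rewrite mulrA; have := n_lt (k := n%:R * 2) (ddP x).1; rewrite /rho; apply => //; have : (0:R) <= n%:R by []; lra.
have k1 := (ddP x).2 _ h1; have k2 := (ddP x).2 _ h2.
have ur : u = r + p by rewrite /r subrK.
have vr : v = r' + p by rewrite /r' subrK.
have a1 : f u r <= e / 8 by rewrite ur; exact: Hp.
have a2 : f v r' <= e / 8 by rewrite vr; exact: Hp.
have t1 := ft u r v; have t2 := ft r x v; have t3 := ft x r' v.
rewrite (fs x r') in t3; rewrite (fs v r') in a2.
lra.
Qed.

Lemma net1 (f : pm R n) : pmok f -> fUC [set f] -> pAP f -> forall e, 0 < e -> fNet [set f] e.
Proof.
move=> [f0 fs ft fxx] fuc fap e e0.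
have e3 : 0 < e / 3 by rewrite divr_gt0.
have [l l0 Hl] := fap _ e3.
have [d d0 Hd] := fuc _ e3.
pose P s := [set p | enorm (p - s) <= l /\ forall t, f (t + p) t <= e / 3].
have PP s : P s (get (P s)) by apply: getPex; have [p hp] := Hl s; exists p.
have w0 : 0 < d / (2 * n%:R + 1).
  by rewrite divr_gt0 //; apply: ltr_pwDr => //; rewrite mulr_ge0.
have [cs Hcs] := @cube_net R n l _ w0.
exists cs => s.
have [ps Hps] := PP s.
pose r := s - get (P s).
have [c ccs Hc] : exists2 c, c \in cs & forall i, `|r ord0 i - c ord0 i| < d / (2 * n%:R + 1).
  apply: Hcs => i; apply: le_trans (enorm_coord _ _) _; by rewrite /r enormB.
exists c => // g -> t.
have h : enorm ((t + r) - (t + c)) < d.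
  rewrite addrDD; apply: le_lt_trans (enorm_le_coord _ (d / (2 * n%:R + 1)) _ _) _.
  - exact: ltW.
  - by move=> i; rewrite coordB; exact: ltW.
  apply: n_lt => //; have : (0:R) <= n%:R by []; lra.
have := Hd f erefl _ _ h.
have ts : t + s = (t + r) + get (P s) by rewrite /r addrA subrK.
have := Hps (t + r); rewrite -ts => a1 a2.
have := ft (t + s) (t + r) (t + c); lra.
Qed.

End Heine.
Unset Implicit Arguments.
Set Strict Implicit.

Lemma normC_real (R : realType) (a : R) : (`|a%:C| = `|a|%:C)%C.
Proof. by rewrite normc_def /= expr0n /= addr0 sqrtr_sqr. Qed.

Lemma min_lip (R : realType) (A a k rho : R) : A <= a + rho -> 0 <= rho ->
  Num.min A k <= Num.min a k + rho.
Proof. by move=> h r0; case: (leP a k) => h1; case: (leP A k) => h2; lra. Qed.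

Section Restr.
Variables (R : realType) (n : nat).
Local Notation vec := 'rV[R]_n.

Lemma notall (P : set (pm R n)) (g : pm R n -> vec -> R) k :
  ~ (forall f, P f -> forall t, g f t <= k) -> exists f t, P f /\ k < g f t.
Proof.
move=> H; apply: contrapT => H'; apply: H => f Pf t; rewrite leNgt; apply/negP => lt.
by apply: H'; exists f, t.
Qed.

Section Psi.
Variables (P : set (pm R n)) (c : vec) (k : R).
Hypotheses (k0 : 0 < k) (okP : fok P) (neP : exists f, P f).

Definition PsiS x := [set y : R | exists f t, P f /\ y = Num.min (f (t + (x + c)) t) k].
Definition Psi x := sup (PsiS x).

Lemma PsiS_ne x : PsiS x !=set0.
Proof. by have [f Pf] := neP; exists (Num.min (f (0 + (x + c)) 0) k), f, 0. Qed.

Lemma PsiS_ub x : ubound (PsiS x) k.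
Proof. by move=> y [f [t [Pf ->]]]; rewrite ge_min lexx orbT. Qed.

Lemma PsiS_has x : has_ubound (PsiS x).
Proof. by exists k; exact: PsiS_ub. Qed.

Lemma Psi_le x : Psi x <= k.
Proof. exact: ge_sup (PsiS_ne x) (PsiS_ub x). Qed.

Lemma Psi_elt x f t : P f -> Num.min (f (t + (x + c)) t) k <= Psi x.
Proof. by move=> Pf; apply: ub_le_sup (PsiS_has x) _ _; exists f, t. Qed.

Lemma Psi_ge0 x : 0 <= Psi x.
Proof.
have [f Pf] := neP; apply: le_trans (Psi_elt x f 0 Pf).
have [f0 _ _ _] := okP _ Pf; by rewrite le_min f0 ltW.
Qed.

Lemma Psi_lip x x' rho : 0 <= rho ->
  (forall f, P f -> forall t, f (t + (x' + c)) (t + (x + c)) <= rho) -> Psi x' <= Psi x + rho.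
Proof.
move=> r0 H; apply: ge_sup (PsiS_ne x') _ => y [f [t [Pf ->]]].
apply: le_trans (@min_lip R _ _ k _ _ r0) _; last by rewrite lerD2r; exact: Psi_elt _ _ _ Pf.
have [_ _ ft _] := okP _ Pf; have := ft (t + (x' + c)) (t + (x + c)) t.
have := H f Pf t; lra.
Qed.

Lemma Psi_dist x x' rho : 0 <= rho ->
  (forall f, P f -> forall t, f (t + (x' + c)) (t + (x + c)) <= rho) -> `|Psi x' - Psi x| <= rho.
Proof.
move=> r0 H; rewrite ler_norml; apply/andP; split.
  suff : Psi x <= Psi x' + rho by lra.
  apply: Psi_lip r0 _ => f Pf t; have [_ fs _ _] := okP _ Pf; rewrite fs; exact: H.
suff : Psi x' <= Psi x + rho by lra.
exact: Psi_lip.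
Qed.

Lemma Psi_big x : (exists f t, P f /\ k < f (t + (x + c)) t) -> k <= Psi x.
Proof.
move=> [f [t [Pf h]]]; apply: le_trans (Psi_elt x f t Pf).
by rewrite le_min (ltW h) lexx.
Qed.

Lemma Psi_c : Psi (- c) = 0.
Proof.
apply/eqP; rewrite eq_le Psi_ge0 andbT.
apply: ge_sup (PsiS_ne _) _ => y [f [t [Pf ->]]].
have [_ _ _ fxx] := okP _ Pf; by rewrite addNr addr0 fxx ge_min lexx.
Qed.
End Psi.

Lemma claim (V0 : completeNormedModType R[i]) (z0 : V0) (I : set vec) (P : set (pm R n)) c k :
  z0 != 0 -> ap_admissible I -> fok P -> fUC P -> (forall e, 0 < e -> fNet P e) -> 0 < k ->
  exists x, I x /\ forall f, P f -> forall t, f (t + (x + c)) t <= k.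
Proof.
move=> z00 adm okP ucP netP k0.
have [//|H] := pselect (exists x, I x /\ forall f, P f -> forall t, f (t + (x + c)) t <= k).
exfalso.
have Hx : forall x, I x -> exists f t, P f /\ k < f (t + (x + c)) t.
  by move=> x Ix; apply: notall => Q; apply: H; exists x.
have [[x0 Ix0] [addI uniq]] := adm.
have [f0 [t0 [Pf0 _]]] := Hx _ Ix0.
have ne : exists f, P f by exists f0.
pose z1 := (`|z0|)^-1 *: z0.
have nz0 : `|z0| != 0 by rewrite normr_eq0.
have nz1 : `|z1| = 1 by rewrite /z1 normrZ normrV ?unitfE // normr_id mulVf.
pose chi x := ((k - Psi P c k x)%:C)%C *: z1.
have chiB x y : `|chi x - chi y| = ((`|Psi P c k y - Psi P c k x|)%:C)%C.
  rewrite /chi -scalerBl normrZ nz1 mulr1 -rmorphB /= normC_real.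
  by congr (_%:C)%C; congr (`|_|); ring.
have apchi : bohr_ap setT chi.
  split.
  - move=> t _ e e0.
    have e2 : 0 < e / 2 by rewrite divr_gt0.
    have [d d0 Hd] := ucP _ e2.
    exists d => // s _ st; rewrite chiB ltcR.
    apply: le_lt_trans (Psi_dist P c k okP ne s t (e / 2) _ _) _.
    + exact: ltW.
    + move=> f Pf t'; apply: ltW; apply: Hd => //.
      by rewrite addrDD [t + c]addrC [s + c]addrC addrDD enormB.
    + lra.
  - move=> e e0; have [cs Hcs] := netP _ e0.
    exists (maxl cs enorm + 1); first by have := maxl_ge0 cs enorm; lra.
    move=> t1 _; have [c' c's Hc'] := Hcs t1.
    exists (t1 - c'); split => //.
      rewrite addrAC subrr add0r enormN; have := maxl_ge _ enorm _ c's; lra.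
    move=> x _; rewrite chiB lecR distrC.
    apply: (Psi_dist P c k okP ne) (ltW e0) _ => f Pf t.
    have := Hc' f Pf (t + (x + c) - c').
    have -> : t + (x + c) - c' + t1 = t + (x + (t1 - c') + c).
      by apply: rv_eq => i; rewrite !mxE; ring.
    by rewrite subrK.
have chi0 x : I x -> chi x = 0.
  move=> Ix; have := Psi_le P c k ne x; have := Psi_big _ _ _ _ (Hx _ Ix) => h1 h2.
  have e : Psi P c k x = k by apply/eqP; rewrite eq_le h1 h2.
  by rewrite /chi e subrr scale0r.

have uc0 : unif_cont_on I (fun=> (0 : V0)).
  by move=> e e0; exists 1 => // s t _ _ _; rewrite subrr normr0 ltcR.
have ap0 (J : set vec) : bohr_ap J (fun=> (0 : V0)).
  split.
  - by move=> t _ e e0; exists 1 => // s _ _; rewrite subrr normr0 ltcR.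
  - move=> e e0; exists 1 => // t1 Jt1; exists t1; split => //.
      by rewrite subrr enorm0.
    by move=> t _; rewrite subrr normr0 lecR ltW.
have [Ht [_ _ HU]] := uniq V0 (fun=> 0) uc0 (ap0 I).
have e1 := HU (fun=> 0) (ap0 setT) (fun _ _ => erefl).
have e2 := HU chi apchi chi0.
have : chi (- c) = 0 by rewrite e2 -e1.
move/(congr1 (fun v : V0 => `|v|)); rewrite /chi normrZ nz1 mulr1 (Psi_c P c k k0 okP ne) subr0 normC_real normr0.
move/(congr1 (@complex.Re R)) => /= /eqP; rewrite normr_eq0; apply/negP; exact: lt0r_neq0.
Qed.

Lemma restr (V0 : completeNormedModType R[i]) (z0 : V0) (I : set vec) (P : set (pm R n)) :
  z0 != 0 -> ap_admissible I -> fok P -> fUC P -> (forall e, 0 < e -> fNet P e) ->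
  forall e, 0 < e -> exists2 l, 0 < l & forall t0, I t0 -> exists tau,
    [/\ I tau, enorm (tau - t0) <= l & forall f, P f -> forall t, f (t + tau) t <= e].
Proof.
move=> z00 adm okP ucP netP e e0.
have k0 : 0 < e / 2 by rewrite divr_gt0.
have [cs Hcs] := netP _ k0.
pose Q c := [set x | I x /\ forall f, P f -> forall t, f (t + (x + c)) t <= e / 2].
have xcP c : Q c (get (Q c)) by apply: getPex; exact: claim z00 adm okP ucP netP k0.
exists (maxl cs (fun c => enorm (get (Q c))) + 1).
  by have := maxl_ge0 cs (fun c => enorm (get (Q c))); lra.
move=> t0 It0; have [c ccs Hc] := Hcs t0.
have [Ix Hx] := xcP c.
have [_ [addI _]] := adm.
exists (get (Q c) + t0); split.
- exact: addI.
- rewrite addrK; have := maxl_ge _ (fun c => enorm (get (Q c))) _ ccs; lra.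
- move=> f Pf t; have [_ _ ft _] := okP f Pf.
  apply: le_trans (ft _ (t + (get (Q c) + c)) _) _.
  have := Hx f Pf t; have := Hc f Pf (t + get (Q c)); rewrite -!addrA; lra.
Qed.
End Restr.
Section Phi.
Variables (R : realType) (n : nat) (V : normedModType R[i]).
Local Notation vec := 'rV[R]_n.

Definition phi (h : vec -> V) : pm R n := fun u v => nrm (h u - h v).

Lemma phi_ok h : pmok (phi h).
Proof.
split; rewrite /phi.
- by move=> u v; exact: nrm_ge0.
- by move=> u v; exact: nrmB.
- by move=> u v w; rewrite (_ : h u - h w = (h u - h v) + (h v - h w)) ?nrmD // addrA subrK.
- by move=> u; rewrite subrr nrm0.
Qed.

Lemma phi_cont h : bohr_ap setT h -> pcont (phi h).
Proof.
move=> [hc _] u e e0; have [d d0 Hd] := hc u I e e0.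
by exists d => // v vu; rewrite /phi -nrm_lt; exact: Hd.
Qed.

Lemma phi_ap h : bohr_ap setT h -> pAP (phi h).
Proof.
move=> [_ hp] e e0; have [l l0 Hl] := hp e e0.
exists l => // s; have [p [_ ps Hp]] := Hl s I.
by exists p; split => // t; rewrite /phi -nrm_le; exact: Hp.
Qed.

Lemma phi_UC h : bohr_ap setT h -> fUC [set phi h].
Proof. by move=> hap; apply: heine; [exact: phi_ok|exact: phi_cont|exact: phi_ap]. Qed.

Lemma phi_net h : bohr_ap setT h -> forall e, 0 < e -> fNet [set phi h] e.
Proof. by move=> hap; apply: net1; [exact: phi_ok|exact: phi_UC|exact: phi_ap]. Qed.
End Phi.
Arguments phi {R n V}. Arguments phi_ok {R n V}. Arguments phi_cont {R n V}.
Arguments phi_ap {R n V}. Arguments phi_UC {R n V}. Arguments phi_net {R n V}.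

Section Fam.
Variables (R : realType) (n : nat) (Y Z : normedModType R[i]).
Variables (B : set Y) (Gext : Y -> 'rV[R]_n -> Z).
Hypothesis GextP : forall y, B y -> bohr_ap setT (Gext y).

Definition PG (ys : seq Y) : set (pm R n) :=
  [set f | exists y, [/\ y \in ys, B y & f = phi (Gext y)]].

Lemma PG_ok ys : fok (PG ys).
Proof. by move=> f [y [_ _ ->]]; exact: phi_ok. Qed.

Lemma PG_prop ys : fUC (PG ys) /\ forall e, 0 < e -> fNet (PG ys) e.
Proof.
elim: ys => [|y ys [IH1 IH2]].
  have sub : PG [::] `<=` set0 by move=> f [y []].
  split; first exact: fUC_sub sub (@fUC0 R n).
  by move=> e e0; apply: fNet_sub sub _; exact: fNet0.
have [By|nBy] := pselect (B y).
  have sub : PG (y :: ys) `<=` [set phi (Gext y)] `|` PG ys.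
    move=> f [y' [/[!in_cons] /orP[/eqP ->|y's] By' ->]]; [by left|right].
    by exists y'.
  split.
    by apply: fUC_sub sub _; apply: fUCU => //; exact: phi_UC _ (GextP _ By).
  move=> e e0; apply: fNet_sub sub _; apply: fNetU => //.
  - by move=> f ->; exact: phi_ok.
  - exact: PG_ok.
  - exact: phi_net _ (GextP _ By).
have sub : PG (y :: ys) `<=` PG ys.
  move=> f [y' [/[!in_cons] /orP[/eqP ->|y's] By' ->]] //; by exists y'.
split; first exact: fUC_sub sub IH1.
by move=> e e0; apply: fNet_sub sub (IH2 e e0).
Qed.
End Fam.
Lemma tele (Z : zmodType) (a b c : Z) : (a - b) + (b - c) = a - c.
Proof. by rewrite addrA subrK. Qed.

Theorem theorem2p50 (R : realType) (n : nat)
  (Y Z : completeNormedModType R[i]) (BB : set (set Y))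
  (I : set 'rV[R]_n) (F : 'rV[R]_n -> Y) (G : 'rV[R]_n -> Y -> Z) (B : set Y) :
  (forall B', BB B' -> B' !=set0) ->
  ap_admissible I ->
  unif_cont_on I F -> bohr_ap I F ->
  bohr_B_ap I BB G ->
  closure (F @` I) = B -> BB B ->
  unif_cont_on2 I B G ->
  unif_cont_on I (fun t => G t (F t)) /\ bohr_ap I (fun t => G t (F t)).
Proof.
move=> BBne adm Fuc Fap Gap clB BBB Guc.
have FB t : I t -> B (F t) by move=> It; rewrite -clB; apply: subset_closure; exists t.
have Wuc : unif_cont_on I (fun t => G t (F t)).
  move=> e e0; have [d1 d10 H1] := Guc e e0; have [d2 d20 H2] := Fuc d1 d10.
  exists (Num.min d1 d2); first by rewrite lt_min d10 d20.
  move=> s t Is It; rewrite lt_min => /andP[s1 s2].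
  by apply: H1 => //; [exact: FB|exact: FB|exact: H2].
split => //; split.
  by move=> t It e e0; have [d d0 Hd] := Wuc e e0; exists d => // s Is; exact: Hd.
move=> e e0.
have [[z0 z00]|Z0] := pselect (exists z : Z, z != 0); last first.
  have z0 (z : Z) : z = 0.
    by apply/eqP; apply: contrapT => h; apply: Z0; exists z; apply/negP.
  have [l l0 Hl] := Fap.2 e e0.
  exists l => // t0 It0; have [tau [Itau ht _]] := Hl t0 It0; exists tau; split => // t It.
  by rewrite (z0 (_ - _)) normr0 lecR ltW.
have e4 : 0 < e / 4 by rewrite divr_gt0.
have [d1 d10 H1] := Guc _ e4.
have [_ [addI ext]] := adm.
have [Ft [FtAP FtI _]] := ext Y F Fuc Fap.
have d3 : 0 < d1 / 3 by rewrite divr_gt0.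
have [cs Hcs] := phi_net Ft FtAP _ d3.
pose rel c := [set s | I s /\ forall t, phi Ft (t + s) (t + c) <= d1 / 3].
pose ys := [seq F (get (rel c)) | c <- cs].
pose Gset y := [set Ht : 'rV[R]_n -> Z | bohr_ap setT Ht /\ forall t, I t -> Ht t = G t y].
pose Gext y := get (Gset y).
have GextP y : B y -> bohr_ap setT (Gext y) /\ forall t, I t -> Gext y t = G t y.
  move=> By; apply: (getPex (P := Gset y)).
  have uc : unif_cont_on I (fun t => G t y).
    move=> e' e'0; have [d d0 Hd] := Guc e' e'0; exists d => // s t Is It st.
    by apply: Hd => //; rewrite subrr normr0 ltcR.
  have ap : bohr_ap I (fun t => G t y).
    split.
    - move=> t It e' e'0; have [d d0 Hd] := Gap.1 t y It e' e'0.
      by exists d => // s Is st; apply: Hd => //; rewrite subrr normr0 ltcR.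
    - move=> e' e'0; have [l l0 Hl] := Gap.2 B BBB e' e'0.
      exists l => // t0 It0; have [tau [Itau ht Htau]] := Hl t0 It0.
      by exists tau; split => // t It; apply: Htau.
  have [Ht [HtAP HtI _]] := ext Z (fun t => G t y) uc ap.
  by exists Ht.
pose P := [set phi Ft] `|` PG R n Y Z B Gext ys.
have [PGuc PGnet] := @PG_prop R n Y Z B Gext (fun y By => (GextP y By).1) ys.
have okP : fok P by move=> f [->|Pf]; [exact: phi_ok|exact: (@PG_ok R n Y Z B Gext ys f Pf)].
have ucP : fUC P := fUCU (phi_UC Ft FtAP) PGuc.
have netP : forall e', 0 < e' -> fNet P e'.
  apply: fNetU => //; last exact: phi_net Ft FtAP.
  - by move=> f ->; exact: phi_ok.
  - exact: (@PG_ok R n Y Z B Gext ys).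
pose eta := Num.min (d1 / 2) (e / 4).
have eta0 : 0 < eta by rewrite lt_min e4 divr_gt0.
have etad : eta <= d1 / 2 by rewrite ge_min lexx.
have etae : eta <= e / 4 by rewrite ge_min lexx orbT.
have [l l0 Hl] := @restr R n Z z0 I P z00 adm okP ucP netP _ eta0.
exists l => // t0 It0; have [tau [Itau ht Htau]] := Hl t0 It0.
exists tau; split => // t It.
have Itt := addI _ _ It Itau.
have hF : nrm (F (t + tau) - F t) <= eta.
  by have := Htau (phi Ft) (or_introl erefl) t; rewrite /phi !FtI.
have [c ccs Hc] := Hcs t.
have rc : rel c (get (rel c)).
  by apply: getPex; exists t; split => // t'; exact: Hc (phi Ft) erefl t'.
have [Is' Hs'] := rc.
have yys : F (get (rel c)) \in ys by apply: map_f.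
have By : B (F (get (rel c))) := FB _ Is'.
have hy : nrm (F t - F (get (rel c))) < d1.
  have a1 := Hc (phi Ft) erefl 0; have a2 := Hs' 0; rewrite !add0r in a1 a2.
  have [_ fs ft _] := phi_ok Ft; have := ft t c (get (rel c)).
  rewrite [phi Ft c _]fs {1}/phi !FtI //; lra.
have hG : nrm (G (t + tau) (F (get (rel c))) - G t (F (get (rel c)))) <= eta.
  have := Htau (phi (Gext (F (get (rel c))))) (or_intror (ex_intro _ _ (And3 yys By erefl))) t.
  by rewrite /phi !(GextP _ By).2.
set y := F (get (rel c)) in hy hG By.
have k1 : nrm (G (t + tau) (F (t + tau)) - G (t + tau) (F t)) < e / 4.
  rewrite -nrm_lt; apply: H1 => //; try exact: FB.
    by rewrite subrr enorm0.
  rewrite nrm_lt; lra.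
have k2 : nrm (G (t + tau) (F t) - G (t + tau) y) < e / 4.
  rewrite -nrm_lt; apply: H1 => //; try exact: FB.
    by rewrite subrr enorm0.
  by rewrite nrm_lt.
have k4 : nrm (G t y - G t (F t)) < e / 4.
  rewrite -nrm_lt; apply: H1 => //; try exact: FB.
    by rewrite subrr enorm0.
  by rewrite nrm_lt nrmB.
rewrite nrm_le.
have -> : G (t + tau) (F (t + tau)) - G t (F t) =
  (G (t + tau) (F (t + tau)) - G (t + tau) (F t)) +
  ((G (t + tau) (F t) - G (t + tau) y) + ((G (t + tau) y - G t y) + (G t y - G t (F t)))).
  by rewrite !tele.
have := nrmD (G (t + tau) (F (t + tau)) - G (t + tau) (F t))
  (G (t + tau) (F t) - G (t + tau) y + (G (t + tau) y - G t y + (G t y - G t (F t)))).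
have := nrmD (G (t + tau) (F t) - G (t + tau) y) (G (t + tau) y - G t y + (G t y - G t (F t))).
have := nrmD (G (t + tau) y - G t y) (G t y - G t (F t)).
lra.
Qed.
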